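(* Let $q$ be a prime power and let $L\subseteq\{0,1,\ldots,q-1\}$. If $\mathcal{F}\subseteq2^{[n]}$ is a $q$-modular $L$-avoiding $L$-intersecting system, then $$|\mathcal{F}|\le\sum_{i=0}^{q-1}\binom{n}{i}.$$
   Context: For $L\subseteq\{0,\ldots,q-1\}$, $\mathcal{F}\subseteq2^{[n]}$ is $q$-modular $L$-intersecting if for all distinct $A,B\in\mathcal{F}$, $|A\cap B|\equiv\ell\pmod q$ for some $\ell\in L$, and $q$-modular $L$-avoiding if for every $A\in\mathcal{F}$, $|A|\not\equiv\ell\pmod q$ for all $\ell\in L$. *)

(* Defs.v *)
From mathcomp Require Import all_boot all_order.
Set Implicit Arguments. Unset Strict Implicit. Unset Printing Implicit Defensive.

Definition prime_power (q : nat) : Prop :=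
  exists p k : nat, prime p /\ 0 < k /\ q = p ^ k.

Definition modular_L_intersecting (q n : nat) (L : {set 'I_q})
    (F : {set {set 'I_n}}) : Prop :=
  forall A B, A \in F -> B \in F -> A != B ->
    exists2 l : 'I_q, l \in L & #|A :&: B| = nat_of_ord l %[mod q].

Definition modular_L_avoiding (q n : nat) (L : {set 'I_q})
    (F : {set {set 'I_n}}) : Prop :=
  forall A, A \in F -> forall l : 'I_q, l \in L ->
    #|A| <> nat_of_ord l %[mod q].

(* Main.v *)
Require Import Defs.
From mathcomp Require Import all_boot all_order all_algebra.
Set Implicit Arguments. Unset Strict Implicit. Unset Printing Implicit Defensive.
Import GRing.Theory.

Lemma binq p k i : prime p -> 0 < i < p ^ k -> p %| 'C(p ^ k, i).
Proof.
move=> pp /andP[i0 ilt].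
case: i i0 ilt => // j _ jlt.
have E := mul_bin_diag (p ^ k) j.
apply/negPn/negP => nd.
have cp : coprime (p ^ k) 'C(p ^ k, j.+1) by rewrite coprimeXl // prime_coprime.
have : p ^ k %| j.+1 * 'C(p ^ k, j.+1) by rewrite -E dvdn_mulr.
rewrite Gauss_dvdl // => /(dvdn_leq (ltn0Sn j)).
by rewrite leqNgt jlt.
Qed.

Lemma binq_Fp p k N j : prime p -> j < p ^ k ->
  (('C(N + p ^ k, j))%:R = ('C(N, j))%:R :> 'F_p)%R.
Proof.
move=> pp jlt.
rewrite addnC -binomial.Vandermonde natr_sum big_ord_recl /= bin0 mul1n subn0.
rewrite big1 ?addr0 // => i _.
rewrite natrM.
have -> : (('C(p ^ k, bump 0 i))%:R = 0 :> 'F_p)%R.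
  apply/eqP; rewrite -(dvdn_pcharf (pchar_Fp pp)); apply: binq => //.
  rewrite /bump /= add1n; apply: leq_trans jlt; rewrite ltnS ltn_ord //.

by rewrite mul0r.
Qed.

Lemma binmod_Fp p k N j : prime p -> j < p ^ k ->
  (('C(N, j))%:R = ('C(N %% p ^ k, j))%:R :> 'F_p)%R.
Proof.
move=> pp jlt.
rewrite {1}(divn_eq N (p ^ k)).
elim: (N %/ p ^ k) => [|m IH]; first by rewrite mul0n add0n.
by rewrite mulSn -addnA addnC binq_Fp // addnC.
Qed.
Lemma bin_small_eq b q : b < q -> 'C(b, q.-1) = (b == q.-1).
Proof.
move=> bq; case: (ltngtP b q.-1) => h.
- by rewrite bin_small.
- have q0 : 0 < q by apply: leq_ltn_trans bq.
  by move: bq; rewrite -(prednK q0) ltnS leqNgt h.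
- by rewrite h binn.
Qed.
Lemma ind_Fp p k m l : prime p -> l < p ^ k ->
  (('C(m + ((p ^ k).-1 - l), (p ^ k).-1))%:R = ((m %% p ^ k)%N == l)%:R :> 'F_p)%R.
Proof.
move=> pp lq.
set q := p ^ k in lq *.
have q0 : 0 < q by apply: leq_ltn_trans lq.
have lq1 : l <= q.-1 by rewrite -ltnS prednK.
rewrite (binmod_Fp _ pp (_ : (p ^ k).-1 < p ^ k)); last by rewrite prednK.
rewrite -/q.
rewrite bin_small_eq ?ltn_mod //.
congr (_%:R)%R; congr (nat_of_bool _).
have E : ((m + (q.-1 - l)) %% q == q.-1) = (m + (q.-1 - l) == q.-1 %[mod q]).
  by rewrite [q.-1 %% q]modn_small // prednK.
rewrite E -(eqn_modDr l) -addnA subnK //.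
rewrite [X in _ == X %[mod _]]addnC eqn_modDr.
by rewrite (modn_small lq).
Qed.
Lemma count_sub (T : finType) (X : {set T}) (q : nat) (f : nat -> nat) :
  \sum_(S : {set T} | (S \subset X) && (#|S| < q)) f #|S| =
  \sum_(j < q) 'C(#|X|, j) * f j.
Proof.
rewrite (eq_bigr (fun S : {set T} => \sum_(j < q | #|S| == j) f j)); last first.
  move=> S /andP[_ Sq].
  rewrite (big_pred1 (Ordinal Sq)) //= => j.
rewrite (exchange_big_dep xpredT) //=.
apply: eq_bigr => j _.
rewrite -cards_draws -sum_nat_const.
apply: eq_bigl => S; rewrite inE.
case: (S \subset X) => //=.
case: eqP => [->|]; last by rewrite andbF.
by rewrite ltn_ord.
Qed.
Lemma KI (R : nzRingType) (d n : nat) (L : {set 'I_d.+1}) (X : {set 'I_n}) :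
  (1 - \sum_(l in L) ('C(#|X| + (d - l), d)%N)%:R : R)%R =
  (\sum_(S : {set 'I_n} | (S \subset X) && (#|S| < d.+1)%N)
     ((S == set0)%:R - \sum_(l in L) ('C(d - l, d - #|S|)%N)%:R))%R.
Proof.
rewrite sumrB; congr (_ - _)%R.
  rewrite (bigD1 set0) /=; last by rewrite sub0set cards0.
  rewrite eqxx big1 ?addr0 // => S /andP[_ /negbTE ->]; by [].
rewrite exchange_big /=; apply: eq_bigr => l _.
rewrite -natr_sum; congr (_%:R)%R.
rewrite (count_sub X d.+1 (fun j => 'C(d - l, d - j))).
by rewrite binomial.Vandermonde.
Qed.

Theorem mainTheorem15 (q n : nat) (L : {set 'I_q}) (F : {set {set 'I_n}}) :
  prime_power q ->
  modular_L_avoiding L F ->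
  modular_L_intersecting L F ->
  (#|F| <= \sum_(0 <= i < q) 'C(n, i))%N.
Proof.
move=> [p [k [pp [k0 qE]]]].
case: q L qE => [|d] L qE Hav Hint.
  have : (0 < p ^ k)%N by rewrite expn_gt0 prime_gt0.
  by rewrite -qE.
set K := [set S : {set 'I_n} | (#|S| < d.+1)%N].
have cardK : #|K| = \sum_(0 <= i < d.+1) 'C(n, i).
  rewrite big_mkord.
  have := count_sub [set: 'I_n] d.+1 (fun _ => 1%N).
  rewrite cardsT card_ord.
  move=> E; transitivity (\sum_(j < d.+1) 'C(n, j) * 1); last first.
    by apply: eq_bigr => j _; rewrite muln1.
  rewrite -E -sum1_card; apply: eq_bigl => S.
  by rewrite inE subsetT.
rewrite -cardK.
have ind : forall m (l : 'I_d.+1),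
    (('C(m + (d - l), d))%:R = ((m %% d.+1)%N == l)%:R :> 'F_p)%R.
  move=> m l; have lt : (l < p ^ k)%N by rewrite -qE.
  by have := ind_Fp m pp lt; rewrite -qE /=.
pose w (S : {set 'I_n}) : 'F_p :=
  ((S == set0)%:R - \sum_(l in L) ('C(d - l, d - #|S|)%N)%:R)%R.
pose aF (i : 'I_#|F|) : {set 'I_n} := enum_val i.
pose sK (i : 'I_#|K|) : {set 'I_n} := enum_val i.
pose Cm : 'M['F_p]_(#|F|, #|K|) :=
  (\matrix_(i, j) ((sK j \subset aF i)%:R * w (sK j)))%R.
pose Nm : 'M['F_p]_(#|K|, #|F|) :=
  (\matrix_(j, k) ((sK j \subset aF k)%:R))%R.
have prod : (Cm *m Nm = 1%:M)%R.
  apply/matrixP => i j; rewrite !mxE.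
  set A := aF i; set B := aF j.
  rewrite (eq_bigr (fun l : 'I_#|K| => (fun S : {set 'I_n} => (S \subset A)%:R * w S * (S \subset B)%:R)%R (sK l))); last first.
    by move=> l _; rewrite !mxE.
  rewrite /sK -(big_enum_val (fun S : {set 'I_n} => (S \subset A)%:R * w S * (S \subset B)%:R)%R) /=.
  transitivity (1 - \sum_(l in L) ('C(#|A :&: B| + (d - l), d)%N)%:R : 'F_p)%R.
    rewrite KI big_mkcond [RHS]big_mkcond /=; apply: eq_bigr => S _.
    rewrite inE subsetI.
    by case: (S \subset A); case: (S \subset B); case: (#|S| < d.+1)%N;
      rewrite /= ?mul1r ?mulr1 ?mul0r ?mulr0.
  under eq_bigr do rewrite ind.
  have aFin : forall x, aF x \in F by move=> x; apply: enum_valP.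
  case: eqP => [e|neq].
    rewrite /B /A -e setIid big1 ?subr0 // => l Hl.
    have := Hav _ (aFin i) l Hl.
    rewrite /= (modn_small (ltn_ord l)).
    by case: eqP.
  have neq' : aF i != aF j.
    by apply/eqP => /enum_val_inj.
  have [l Hl E] := Hint _ _ (aFin i) (aFin j) neq'.
  rewrite (bigD1 l) //= -/A -/B E (modn_small (ltn_ord l)) eqxx big1 ?addr0 ?subrr // => l' /andP[_ ne].
  case: eqP => // h; move: ne; by rewrite (val_inj h) eqxx.
rewrite -[X in (X <= _)%N](mxrank1 'F_p #|F|) -prod.
exact: leq_trans (mxrankM_maxl _ _) (rank_leq_col _).
Qed.
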